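(* Let $A'\to A$ be a surjection in $\mathcal{C}_{\mathbb{E}}$ whose kernel is a $1$-dimensional $\mathbb{E}$-vector space. Let $V'$ be a free $A'$-module of rank $m$ and $V=V'\otimes_{A'}A$. Then the natural map $$\mathrm{GL}(V')\to\mathrm{PGL}(V')\times_{\mathrm{PGL}(V)}\mathrm{GL}(V)\times_{\mathrm{GL}(\det V)}\mathrm{GL}(\det V')$$ is an isomorphism of groups.
   Context: $\mathbb{E}$ is a finite extension of $\mathbb{Q}_\ell$ and $\mathcal{C}_{\mathbb{E}}$ the category of local Artin $\mathbb{E}$-algebras with residue field $\mathbb{E}$. For a free module $V$ over a ring $B$, $\mathrm{GL}(V)=\mathrm{Aut}_B(V)$, $\mathrm{PGL}(V)=\mathrm{GL}(V)/B^*$, and $\det V$ is the top exterior power, so $\mathrm{GL}(\det V)=B^*$; the maps in the fibre product are reduction along $A'\to A$, the projection $\mathrm{GL}\to\mathrm{PGL}$, and the determinant. *)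

(* Defs.v *)
From HB Require Import structures.
From mathcomp Require Import all_boot all_order all_algebra.
Set Implicit Arguments. Unset Strict Implicit. Unset Printing Implicit Defensive.
Import Order.TTheory GRing.Theory Num.Theory.
Local Open Scope ring_scope.

(* A is an object of C_E: a local Artin E-algebra with residue field E.
   - finite dimensional over E (equivalent to Artinian for such algebras),
   - local: the non-units are closed under addition (they form the maximal ideal),
   - residue field E: every element is congruent to a scalar modulo the maximal ideal. *)
Definition in_CE (E : fieldType) (A : comUnitAlgType E) : Prop :=
  [/\ (exists (n : nat) (phi : A -> 'rV[E]_n), linear phi /\ injective phi),
      (forall x y : A, x \isn't a GRing.unit -> y \isn't a GRing.unit ->
                       x + y \isn't a GRing.unit)
    & (forall a : A, exists c : E, a - c%:A \isn't a GRing.unit)].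

Definition ker_dim1 (E : fieldType) (A' A : comUnitAlgType E)
  (f : {lrmorphism A' -> A}) : Prop :=
  exists2 e : A', e != 0 /\ f e = 0 &
    forall x : A', f x = 0 -> exists c : E, x = c *: e.

(* V' = A'^m, so GL(V') = invertible m x m matrices over A'.
   Two elements of GL define the same element of PGL iff they differ by a unit scalar. *)
Definition pgl_eq (B : comUnitRingType) (m : nat) (M N : 'M[B]_m) : Prop :=
  exists2 c : B, c \is a GRing.unit & N = c *: M.

(* Elements of PGL(V') x_{PGL(V)} GL(V) x_{GL(det V)} GL(det V'), represented by
   triples (h, g, u) with h a representative of the PGL(V') class. *)
Definition fibre_elt (E : fieldType) (A' A : comUnitAlgType E)
  (f : {lrmorphism A' -> A}) (m : nat)
  (h : 'M[A']_m) (g : 'M[A]_m) (u : A') : Prop :=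
  [/\ h \in unitmx, g \in unitmx, u \is a GRing.unit,
      pgl_eq (map_mx f h) g & \det g = f u].

Definition fibre_eq (A' A : comUnitRingType) (m : nat)
  (t1 t2 : 'M[A']_m * 'M[A]_m * A') : Prop :=
  [/\ pgl_eq t1.1.1 t2.1.1, t1.1.2 = t2.1.2 & t1.2 = t2.2].

Definition fibre_mul (A' A : comUnitRingType) (m : nat)
  (t1 t2 : 'M[A']_m * 'M[A]_m * A') : 'M[A']_m * 'M[A]_m * A' :=
  (t1.1.1 *m t2.1.1, t1.1.2 *m t2.1.2, t1.2 * t2.2).

Definition nat_map (E : fieldType) (A' A : comUnitAlgType E)
  (f : {lrmorphism A' -> A}) (m : nat) (x : 'M[A']_m)
  : 'M[A']_m * 'M[A]_m * A' :=
  (x, map_mx f x, \det x).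

Definition nat_map_iso (E : fieldType) (A' A : comUnitAlgType E)
  (f : {lrmorphism A' -> A}) (m : nat) : Prop :=
  [/\
      (forall x : 'M[A']_m, x \in unitmx ->
         let t := nat_map f x in fibre_elt f t.1.1 t.1.2 t.2),
      (forall x y : 'M[A']_m, x \in unitmx -> y \in unitmx ->
         fibre_eq (nat_map f (x *m y)) (fibre_mul (nat_map f x) (nat_map f y))),
      (forall x y : 'M[A']_m, x \in unitmx -> y \in unitmx ->
         fibre_eq (nat_map f x) (nat_map f y) -> x = y)
    &
      (forall (h : 'M[A']_m) (g : 'M[A]_m) (u : A'), fibre_elt f h g u ->
         exists2 x : 'M[A']_m, x \in unitmx & fibre_eq (nat_map f x) (h, g, u))].

(* Main.v *)
Require Import Defs.
From HB Require Import structures.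
From mathcomp Require Import all_boot all_order all_algebra.
Import GRing.Theory.
Local Open Scope ring_scope.

Section Aux.
Variables (E : fieldType) (A' A : comUnitAlgType E).
Variable (f : {rmorphism A' -> A}).
Hypothesis local : forall x y : A', x \isn't a GRing.unit -> y \isn't a GRing.unit ->
                       x + y \isn't a GRing.unit.
Variable e : A'.
Hypothesis e_nz : e != 0.
Hypothesis fe : f e = 0.
Hypothesis ker : forall x : A', f x = 0 -> exists c : E, x = c *: e.

Lemma scal_unit (c : E) : c != 0 -> (c%:A : A') \is a GRing.unit.
Proof. move=> cnz; apply: (rmorph_unit (in_alg A')); by rewrite unitfE. Qed.

Lemma ker_nonunit z : f z = 0 -> z \isn't a GRing.unit.
Proof.
move=> fz; apply/negP => hu; have : f z \is a GRing.unit by exact: (rmorph_unit f hu).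
by rewrite fz unitr0.
Qed.

Lemma ann n z : n \isn't a GRing.unit -> f z = 0 -> n * z = 0.
Proof.
move=> nn fz.
have ne0 : n * e = 0.
  have [b hb] : exists b : E, n * e = b *: e by apply: ker; rewrite rmorphM fe mulr0.
  have [b0|bnz] := eqVneq b 0; first by rewrite hb b0 scale0r.
  have hu : (n - b%:A) \is a GRing.unit.
    apply/negPn/negP => hn.
    have := @local n (-(n - b%:A)) nn; rewrite unitrN => /(_ hn).
    rewrite opprB addrC subrK => /negP; apply; exact: scal_unit.
  have h0 : (n - b%:A) * e = 0 by rewrite mulrBl mulr_algl hb subrr.
  by move/negP: e_nz; case; rewrite -(mulKr hu e) h0 mulr0.
have [k ->] := ker _ fz.
by rewrite -scalerAr ne0 scaler0.
Qed.

Lemma sq0 z : f z = 0 -> z * z = 0.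
Proof. move=> fz; exact: (ann _ _ (ker_nonunit _ fz) fz). Qed.

Lemma pow1t (t : A') n : t * t = 0 -> (1 + t) ^+ n = 1 + t *+ n.
Proof.
move=> tt; elim: n => [|n IH]; first by rewrite expr0 mulr0n addr0.
rewrite exprS IH mulrDl mul1r mulrDr mulr1 mulrnAr tt mul0rn addr0.
by rewrite mulrS addrA [1 + t + _]addrAC.
Qed.

Hypothesis fsurj : forall a : A, exists a' : A', f a' = a.
Hypothesis charE0 : [pchar E] =i pred0.

Lemma oneU (t : A') : t * t = 0 -> (1 + t) \is a GRing.unit.
Proof. by move=> tt; apply/unitrPr; exists (1 - t); rewrite mulrDl mul1r mulrBr mulr1 tt subr0 subrK. Qed.

Lemma lift_unit a : f a \is a GRing.unit -> a \is a GRing.unit.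
Proof.
case/unitrPr => d hd; have [d' fd'] := fsurj d.
have fz : f (a * d' - 1) = 0 by rewrite rmorphB rmorphM rmorph1 fd' hd subrr.
have : (a * d') \is a GRing.unit.
  by rewrite -[a * d'](subrK 1) addrC; apply: oneU; apply: sq0.
by rewrite unitrM => /andP[].
Qed.

Lemma natU n : n != 0%N -> (n%:R : A') \is a GRing.unit.
Proof.
move=> nz; rewrite -(rmorph_nat (in_alg A')); apply: scal_unit.
by have /pcharf0P -> := charE0.
Qed.

Variable m' : nat.
Local Notation m := m'.+1.

Lemma main_aux :
  [/\ (forall x : 'M[A']_m, x \in unitmx -> [/\ x \in unitmx, map_mx f x \in unitmx,
          \det x \is a GRing.unit, pgl_eq (map_mx f x) (map_mx f x) & \det (map_mx f x) = f (\det x)]),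
      (forall x y : 'M[A']_m, x \in unitmx -> y \in unitmx ->
          [/\ pgl_eq (x *m y) (x *m y), map_mx f (x *m y) = map_mx f x *m map_mx f y
            & \det (x *m y) = \det x * \det y]),
      (forall x y : 'M[A']_m, x \in unitmx -> y \in unitmx ->
          [/\ pgl_eq x y, map_mx f x = map_mx f y & \det x = \det y] -> x = y)
    & (forall (h : 'M[A']_m) (g : 'M[A]_m) (u : A'),
         [/\ h \in unitmx, g \in unitmx, u \is a GRing.unit, pgl_eq (map_mx f h) g & \det g = f u] ->
         exists2 x : 'M[A']_m, x \in unitmx & [/\ pgl_eq x h, map_mx f x = g & \det x = u])].
Proof.
have pglr (B : comUnitRingType) (M : 'M[B]_m) : pgl_eq M M by exists 1; rewrite ?unitr1 ?scale1r.
split.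
- move=> x xU; have dU : \det x \is a GRing.unit by rewrite -unitmxE.
  split => //; last by rewrite det_map_mx.
  by rewrite unitmxE det_map_mx; apply: rmorph_unit.
- by move=> x y _ _; split => //; rewrite ?map_mxM ?det_mulmx.
- move=> x y xU yU [[c cU ->] hm hd].
  suff -> : c = 1 by rewrite scale1r.
  have hX : map_mx f x \in unitmx by rewrite unitmxE det_map_mx; apply: rmorph_unit; rewrite -unitmxE.
  have h1 : (f c - 1) *: map_mx f x = 0 by rewrite scalerBl scale1r -map_mxZ hm subrr.
  have h2 : (f c - 1) *: (1%:M : 'M[A]_m) = 0 by rewrite -(mulmxV hX) scalemxAl h1 mul0mx.
  have h3 : f (c - 1) = 0.
    rewrite rmorphB rmorph1.
    by have := congr1 (fun M : 'M[A]_m => M ord0 ord0) h2; rewrite !mxE eqxx /= mulr1.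
  have tt := sq0 _ h3.
  have xdU : \det x \is a GRing.unit by rewrite -unitmxE.
  have : c ^+ m = 1 by apply: (mulIr xdU); rewrite mul1r -detZ.
  rewrite -[c](subrK 1) addrC pow1t // => /eqP; rewrite -subr_eq0 addrAC subrr add0r -mulr_natl => /eqP ht.
  by rewrite -[c - 1](mulKr (@natU m _)) // ht mulr0 addr0.
- move=> h g u [hU gU uU [c cU gE] dg].
  have [c' fc'] := fsurj c.
  have c'U : c' \is a GRing.unit by apply: lift_unit; rewrite fc'.
  have hdU : \det h \is a GRing.unit by rewrite -unitmxE.
  set d := c' ^+ m * \det h.
  have dU : d \is a GRing.unit by rewrite unitrM unitrX.
  have fd : f d = f u by rewrite rmorphM rmorphXn fc' -det_map_mx -detZ -gE dg.
  have fz : f (u - d) = 0 by rewrite rmorphB fd subrr.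
  set t := (m%:R)^-1 * (u - d) * d^-1.
  have ft : f t = 0 by rewrite /t !rmorphM fz mulr0 mul0r.
  have tt := sq0 _ ft.
  have dx : \det (((1 + t) * c') *: h) = u.
    rewrite detZ exprMn -mulrA -/d pow1t // -mulr_natl mulrDl mul1r /t.
    by rewrite -(mulrA m%:R) divrK // mulVKr ?natU // addrC subrK.
  exists (((1 + t) * c') *: h).
    by rewrite unitmxE dx.
  split => //.
    exists ((1 + t) * c')^-1; first by rewrite unitrV unitrM oneU.
    by rewrite scalerA mulVr ?scale1r // unitrM oneU.
  by rewrite map_mxZ rmorphM rmorphD rmorph1 ft addr0 mul1r fc' gE.
Qed.

End Aux.

Theorem lemma14 (E : fieldType) (charE0 : [pchar E] =i pred0)
  (A' A : comUnitAlgType E) (CE_A' : in_CE A') (CE_A : in_CE A)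
  (f : {lrmorphism A' -> A}) (f_surj : forall a : A, exists a' : A', f a' = a)
  (f_ker : ker_dim1 f) (m : nat) (m_pos : (0 < m)%N) :
  nat_map_iso f m.
Proof.
case: CE_A' => _ loc _.
case: f_ker => e [enz fe] ker.
case: m m_pos => // m' _.
have := @main_aux E A' A (f : {rmorphism A' -> A}) loc e enz fe ker f_surj charE0 m'.
case=> H1 H2 H3 H4; split.
- exact: H1.
- exact: H2.
- exact: H3.
- exact: H4.
Qed.
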